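(* Let $\psi,\phi$ be full QBFs and $X$ a finite set of propositional variables. Let $p \in \mathrm{var}(\psi)\setminus \mathrm{free}(\phi)$ be such that no occurrence of $p$ in $\psi$ lies in the scope of a quantifier of $\psi$. Let $Y\subseteq \mathrm{var}(\psi)\setminus \mathrm{var}(\phi)$. Let $X^- = \{x^- : x \in X\}$ and $X^+ = \{x^+ : x \in X\}$ be sets of fresh variables (pairwise distinct and not occurring in $\psi$, $\phi$, $X$, $Y$), and let $\sigma = \{x/x^+ : x \in X\}$. Then $$\exists Y \left(\psi[p/\exists X \phi]\right) \equiv \forall X^-\;\exists (Y \cup X^+ \cup \{p\}) \Big( \psi \land (p \leftrightarrow \phi[\sigma]) \land \bigwedge_{x \in X}\big(\lnot p \rightarrow (x^+ \leftrightarrow x^-)\big) \Big)$$ and $$\exists Y \left(\psi[p/\forall X \phi]\right) \equiv \forall X^-\;\exists (Y \cup X^+ \cup \{p\}) \Big( \psi \land (p \leftrightarrow \phi[\sigma]) \land \bigwedge_{x \in X}\big(p \rightarrow (x^+ \leftrightarrow x^-)\big) \Big).$$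
   Context: Fix a countably infinite set $\mathbb{P}$ of propositional variables and a set of boolean operators, each $k$-ary operator $f^k$ ($k\ge 0$) interpreted by a boolean function $\{0,1\}^k\to\{0,1\}$, containing $\bot,\lnot,\land,\rightarrow,\leftrightarrow$. Full QBFs: the smallest set containing every $p\in\mathbb{P}$, closed under $f^k(\phi_1,\ldots,\phi_k)$ and under $\exists X\phi$, $\forall X\phi$ for finite (possibly empty) $X\subseteq\mathbb{P}$. A valuation $V:\mathbb{P}\to\{0,1\}$ is extended by applying the boolean functions, with $V(\exists X\phi)=1$ iff $V'(\phi)=1$ for some $V'$ agreeing with $V$ on $\mathbb{P}\setminus X$, and $V(\forall X\phi)=1$ iff $V'(\phi)=1$ for all such $V'$. $\phi\equiv\psi$ means $V(\phi)=V(\psi)$ for every valuation $V$. $\mathrm{var}(\phi)$ is the set of variables occurring in $\phi$, $\mathrm{free}(\phi)$ the set of its free variables. $\phi[\sigma]$ for a substitution $\sigma=\{p_1/\phi_1,\ldots,p_k/\phi_k\}$ (distinct $p_i$) simultaneously replaces all free occurrences of each $p_i$ by $\phi_i$. An empty conjunction is $\top$. *)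

(* Defs.v *)
From mathcomp Require Import all_boot.
From mathcomp Require Import boolp.

Set Implicit Arguments.
Unset Strict Implicit.
Unset Printing Implicit Defensive.

(* Operators: every boolean function is available as an operator; a k-ary
   operator is [Op f args] with [size args = k], interpreted by [f] on the
   list of argument values. *)
Inductive qbf : Type :=
| Var : nat -> qbf
| Op : (seq bool -> bool) -> seq qbf -> qbf
| Ex : seq nat -> qbf -> qbf
| All : seq nat -> qbf -> qbf.

Definition valuation := nat -> bool.

Definition agree_off (X : seq nat) (V V' : valuation) : Prop :=
  forall q, q \notin X -> V' q = V q.

Fixpoint eval (V : valuation) (f : qbf) {struct f} : bool :=
  match f with
  | Var p => V p
  | Op g args => g (map (fun a => eval V a) args)
  | Ex X g => `[< exists V' : valuation, agree_off X V V' /\ eval V' g >]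
  | All X g => `[< forall V' : valuation, agree_off X V V' -> eval V' g >]
  end.

Definition qequiv (f g : qbf) : Prop := forall V, eval V f = eval V g.

Fixpoint var (f : qbf) : seq nat :=
  match f with
  | Var p => [:: p]
  | Op _ args => flatten (map var args)
  | Ex X g => X ++ var g
  | All X g => X ++ var g
  end.

Fixpoint free (f : qbf) : seq nat :=
  match f with
  | Var p => [:: p]
  | Op _ args => flatten (map free args)
  | Ex X g => [seq q <- free g | q \notin X]
  | All X g => [seq q <- free g | q \notin X]
  end.

(* simultaneous substitution of free occurrences: s q is the replacement of
   the variable q (s q = Var q means q is not substituted) *)
Fixpoint subst (s : nat -> qbf) (f : qbf) : qbf :=
  match f with
  | Var p => s p
  | Op g args => Op g (map (subst s) args)
  | Ex X g => Ex X (subst (fun q => if q \in X then Var q else s q) g)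
  | All X g => All X (subst (fun q => if q \in X then Var q else s q) g)
  end.

Definition subst1 (p : nat) (a : qbf) : nat -> qbf :=
  fun q => if q == p then a else Var q.

Fixpoint unquantified (p : nat) (f : qbf) : bool :=
  match f with
  | Var _ => true
  | Op _ args => all (unquantified p) args
  | Ex X g => p \notin var (Ex X g)
  | All X g => p \notin var (All X g)
  end.

Definition Top : qbf := Op (fun _ => true) [::].
Definition Neg (a : qbf) : qbf := Op (fun s => ~~ nth false s 0) [:: a].
Definition And (a b : qbf) : qbf :=
  Op (fun s => nth false s 0 && nth false s 1) [:: a; b].
Definition Imp (a b : qbf) : qbf :=
  Op (fun s => nth false s 0 ==> nth false s 1) [:: a; b].
Definition Iff (a b : qbf) : qbf :=
  Op (fun s => nth false s 0 == nth false s 1) [:: a; b].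

Definition BigAnd (l : seq qbf) : qbf := foldr And Top l.

(* Main.v *)
Require Import Defs.
From mathcomp Require Import all_boot boolp.

Fixpoint Allp (P : qbf -> Prop) (l : seq qbf) : Prop :=
  match l with [::] => True | a :: l => P a /\ Allp P l end.

Definition qbf_ind' (P : qbf -> Prop) (HV : forall n, P (Var n))
  (HO : forall g l, Allp P l -> P (Op g l))
  (HE : forall X f, P f -> P (Ex X f)) (HA : forall X f, P f -> P (All X f)) :
  forall f, P f :=
  fix F f := match f with
  | Var n => HV n
  | Op g l => HO g l ((fix G l := match l return Allp P l with
                        [::] => I | a :: l => conj (F a) (G l) end) l)
  | Ex X f => HE X f (F f)
  | All X f => HA X f (F f) end.

Lemma eval_free f : forall V V', (forall q, q \in free f -> V q = V' q) ->
  eval V f = eval V' f.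
Proof.
elim/qbf_ind': f => [n|g l IH|X f IH|X f IH] V V' H /=.
- by apply: H; rewrite inE.
- congr g; elim: l IH H => //= a l IHl [Ha Hl] H.
  rewrite (Ha V V'); last by move=> q Hq; apply: H; rewrite mem_cat Hq.
  by rewrite IHl // => q Hq; apply: H; rewrite mem_cat Hq orbT.
- have key : forall V V', (forall q, q \in [seq q <- free f | q \notin X] -> V q = V' q) ->
     (exists V'', agree_off X V V'' /\ eval V'' f) -> exists V'', agree_off X V' V'' /\ eval V'' f.
    move=> W W' HW [V'' [HA He]].
    exists (fun q => if q \in X then V'' q else W' q); split.
      by move=> q /negbTE ->.
    rewrite -(IH V'') // => q Hq; case: ifP => // HqX.
    by rewrite HA ?HqX // HW // mem_filter HqX.
  apply: asbool_equiv_eq; split; apply: key => q Hq.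
    exact: H.
  by rewrite H.
- have key : forall V V', (forall q, q \in [seq q <- free f | q \notin X] -> V q = V' q) ->
     (forall V'', agree_off X V' V'' -> eval V'' f) -> forall V'', agree_off X V V'' -> eval V'' f.
    move=> W W' HW HH V'' HA.
    have := HH (fun q => if q \in X then V'' q else W' q).
    rewrite -(IH V'') //.
      by apply; move=> q /negbTE ->.
    move=> q Hq; case: ifP => // HqX.
    by rewrite HA ?HqX // HW // mem_filter HqX.
  apply: asbool_equiv_eq; split; apply: key => q Hq.
    by rewrite H.
  exact: H.
Qed.

Lemma free_var f : forall q, q \in free f -> q \in var f.
Proof.
elim/qbf_ind': f => [n|g l IH|X f IH|X f IH] q /=.
- by [].
- elim: l IH => //= a l IHl [Ha Hl]; rewrite !mem_cat => /orP[/Ha->//|/IHl->]; rewrite ?orbT //.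
- by rewrite mem_filter mem_cat => /andP[_ /IH->]; rewrite orbT.
- by rewrite mem_filter mem_cat => /andP[_ /IH->]; rewrite orbT.
Qed.

Lemma subst_id f : forall s, (forall q, q \in var f -> s q = Var q) -> subst s f = f.
Proof.
elim/qbf_ind': f => [n|g l IH|X f IH|X f IH] s H /=.
- by apply: H; rewrite inE.
- congr Op; elim: l IH H => //= a l IHl [Ha Hl] H.
  rewrite Ha; last by move=> q Hq; apply: H; rewrite mem_cat Hq.
  by rewrite IHl // => q Hq; apply: H; rewrite mem_cat Hq orbT.
- rewrite IH // => q Hq; case: ifP => // _; apply: H; by rewrite mem_cat Hq orbT.
- rewrite IH // => q Hq; case: ifP => // _; apply: H; by rewrite mem_cat Hq orbT.
Qed.

Lemma eval_ext f V V' : V =1 V' -> eval V f = eval V' f.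
Proof. by move=> H; apply: eval_free => q _; apply: H. Qed.

Lemma subst_ren f : forall (r : nat -> nat) s V,
  (forall q, s q = Var (r q)) -> (forall q, r q = q \/ r q \notin var f) ->
  eval V (subst s f) = eval (fun q => V (r q)) f.
Proof.
elim/qbf_ind': f => [n|g l IH|X f IH|X f IH] r s V Hs Hr /=.
- by rewrite Hs.
- congr g; elim: l IH Hr => //= a l IHl [Ha Hl] Hr.
  rewrite (Ha r) //; last first.
    by move=> q; case: (Hr q) => [->|]; [left|rewrite mem_cat negb_or => /andP[? _]; right].
  rewrite IHl // => q; case: (Hr q) => [->|]; [left|rewrite mem_cat negb_or => /andP[_ ?]; right] => //.
- set r' := fun q => if q \in X then q else r q.
  have Hs' : forall q, (if q \in X then Var q else s q) = Var (r' q).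
    by move=> q; rewrite /r'; case: ifP.
  have Hr' : forall q, r' q = q \/ r' q \notin var f.
    move=> q; rewrite /r'; case: ifP => _; first by left.
    by case: (Hr q) => [->|]; [left|rewrite mem_cat negb_or => /andP[_ ?]; right].
  have HrX : forall q, q \notin X -> r q \notin X.
    move=> q Hq; case: (Hr q) => [->//|]; by rewrite mem_cat negb_or => /andP[].
  apply: asbool_equiv_eq; split.
    move=> [V'' [HA He]]; exists (fun q => V'' (r' q)); split.
      by move=> q Hq; rewrite /r' (negbTE Hq) HA // HrX.
    by rewrite -(IH r' _ _ Hs' Hr').
  move=> [V3 [HA He]]; exists (fun q => if q \in X then V3 q else V q); split.
    by move=> q /negbTE ->.
  rewrite (IH r' _ _ Hs' Hr'); rewrite (@eval_ext _ _ V3) // => q.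
  rewrite /r' /=; have [Hq|Hq] := boolP (q \in X); first by rewrite Hq.
  by rewrite (negbTE (HrX _ Hq)) HA ?HrX.
- set r' := fun q => if q \in X then q else r q.
  have Hs' : forall q, (if q \in X then Var q else s q) = Var (r' q).
    by move=> q; rewrite /r'; case: ifP.
  have Hr' : forall q, r' q = q \/ r' q \notin var f.
    move=> q; rewrite /r'; case: ifP => _; first by left.
    by case: (Hr q) => [->|]; [left|rewrite mem_cat negb_or => /andP[_ ?]; right].
  have HrX : forall q, q \notin X -> r q \notin X.
    move=> q Hq; case: (Hr q) => [->//|]; by rewrite mem_cat negb_or => /andP[].
  apply: asbool_equiv_eq; split.
    move=> HH V3 HA.
    have := HH (fun q => if q \in X then V3 q else V q).
    rewrite (IH r' _ _ Hs' Hr'); rewrite (@eval_ext _ _ V3).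
      by apply; move=> q /negbTE ->.
    move=> q; rewrite /r' /=; have [Hq|Hq] := boolP (q \in X); first by rewrite Hq.
    by rewrite (negbTE (HrX _ Hq)) HA ?HrX.
  move=> HH V'' HA; rewrite (IH r' _ _ Hs' Hr'); apply: HH.
  by move=> q Hq; rewrite /r' (negbTE Hq) HA // HrX.
Qed.

Definition upd (V : valuation) p b : valuation := fun q => if q == p then b else V q.

Lemma subst1_eval psi p a V : unquantified p psi ->
  eval V (subst (subst1 p a) psi) = eval (upd V p (eval V a)) psi.
Proof.
elim/qbf_ind': psi V => [n|g l IH|X f IH|X f IH] V /= Hu.
- by rewrite /subst1 /upd; case: eqP.
- congr g; elim: l IH Hu => //= b l IHl [Hb Hl] /andP[Hu1 Hu2].
  by rewrite Hb // IHl.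
- rewrite subst_id; last first.
    move=> q Hq; case: ifP => // _; rewrite /subst1; case: eqP => // E.
    by move: Hu; rewrite mem_cat -E Hq orbT.
  change (eval V (Ex X f) = eval (upd V p (eval V a)) (Ex X f)).
  apply: eval_free => q /free_var Hq; rewrite /upd; case: eqP => // E.
  by move: Hu; rewrite -E Hq.
- rewrite subst_id; last first.
    move=> q Hq; case: ifP => // _; rewrite /subst1; case: eqP => // E.
    by move: Hu; rewrite mem_cat -E Hq orbT.
  change (eval V (All X f) = eval (upd V p (eval V a)) (All X f)).
  apply: eval_free => q /free_var Hq; rewrite /upd; case: eqP => // E.
  by move: Hu; rewrite -E Hq.
Qed.

Lemma extend_inj (f : nat -> nat) (X : seq nat) (T D : nat -> bool) :
  {in X &, injective f} -> exists G : valuation,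
  (forall x, x \in X -> G (f x) = T x) /\ (forall q, q \notin map f X -> G q = D q).
Proof.
move=> Hi; exists (fun q => if q \in map f X then T (nth 0 X (index q (map f X))) else D q).
split; last by move=> q /negbTE ->.
move=> x Hx; rewrite map_f //; congr T.
have Hlt : index (f x) (map f X) < size X by rewrite -(size_map f) index_mem map_f.
apply: Hi; [exact: mem_nth|exact: Hx|].
by rewrite -(nth_map 0 (f 0)) // nth_index // map_f.
Qed.

Lemma eval_BigAnd V l : eval V (BigAnd l) = all (eval V) l.
Proof. by elim: l => //= a l <-. Qed.
Lemma evalEx V Z b : eval V (Ex Z b) = `[< exists U, agree_off Z V U /\ eval U b >].
Proof. by []. Qed.
Lemma evalAll V Z b : eval V (All Z b) = `[< forall U, agree_off Z V U -> eval U b >].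
Proof. by []. Qed.

Lemma RHS_eval V psi phi' (X Ys : seq nat) (xm xp : nat -> nat) p gq (gf : bool -> bool)
  (Hg : forall U, eval U gq = gf (U p)) :
 eval V (All (map xm X) (Ex Ys (And psi (And (Iff (Var p) phi')
   (BigAnd [seq Imp gq (Iff (Var (xp x)) (Var (xm x))) | x <- X])))))
 = `[< forall W, agree_off (map xm X) V W -> exists U, agree_off Ys W U /\
      [/\ eval U psi, U p = eval U phi' &
         (gf (U p) -> forall x, x \in X -> U (xp x) = U (xm x))] >].
Proof.
rewrite evalAll; apply: asbool_equiv_eq.
have E : forall U, eval U (And psi (And (Iff (Var p) phi')
   (BigAnd [seq Imp gq (Iff (Var (xp x)) (Var (xm x))) | x <- X]))) =
   [&& eval U psi, U p == eval U phi' & all (fun x => gf (U p) ==> (U (xp x) == U (xm x))) X].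
  move=> U; rewrite /And /Iff /=  eval_BigAnd all_map.
  congr [&& _, _ & _]; apply: eq_all => x /=; by rewrite Hg.
split.
- move=> H W HW; have := H W HW; rewrite evalEx => /asboolP [U [HU Hb]]; exists U; split => //.
  move: Hb; rewrite E => /and3P [H1 /eqP H2 /allP H3]; split => // Hg' x Hx.
  by move: (H3 x Hx); rewrite Hg' => /eqP.
- move=> H W HW; rewrite evalEx; apply/asboolP; have [U [HU [H1 H2 H3]]] := H W HW; exists U; split => //.
  rewrite E H1 -H2 eqxx /=; apply/allP => x Hx; apply/implyP => Hg'.
  by rewrite H3.
Qed.

Theorem lemma1 (psi phi : qbf) (X Y : seq nat) (p : nat)
  (xm xp : nat -> nat)
  (Hp : p \in var psi) (Hpf : p \notin free phi)
  (Hpq : unquantified p psi)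
  (HY : all (fun y => (y \in var psi) && (y \notin var phi)) Y)
  (Hxm_inj : {in X &, injective xm})
  (Hxp_inj : {in X &, injective xp})
  (Hmp : forall x x', x \in X -> x' \in X -> xm x != xp x')
  (Hfresh : forall x, x \in X -> forall z, z \in [:: xm x; xp x] ->
      [/\ z \notin var psi, z \notin var phi, z \notin X & z \notin Y]) :
  let sigma := fun q => if q \in X then Var (xp q) else Var q in
  qequiv (Ex Y (subst (subst1 p (Ex X phi)) psi))
         (All (map xm X) (Ex (Y ++ map xp X ++ [:: p])
            (And psi (And (Iff (Var p) (subst sigma phi))
               (BigAnd [seq Imp (Neg (Var p)) (Iff (Var (xp x)) (Var (xm x))) | x <- X])))))
  /\
  qequiv (Ex Y (subst (subst1 p (All X phi)) psi))
         (All (map xm X) (Ex (Y ++ map xp X ++ [:: p])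
            (And psi (And (Iff (Var p) (subst sigma phi))
               (BigAnd [seq Imp (Var p) (Iff (Var (xp x)) (Var (xm x))) | x <- X]))))).
Proof.
move=> sigma.
have F1 : forall x, x \in X -> [/\ xm x \notin var psi, xm x \notin var phi, xm x \notin X & xm x \notin Y].
  by move=> x Hx; apply: (Hfresh x Hx (xm x)); rewrite inE eqxx.
have F2 : forall x, x \in X -> [/\ xp x \notin var psi, xp x \notin var phi, xp x \notin X & xp x \notin Y].
  by move=> x Hx; apply: (Hfresh x Hx (xp x)); rewrite !inE eqxx orbT.
have nYphi : forall q, q \in var phi -> q \notin Y.
  move=> q Hq; apply/negP => HqY; move/allP: HY => /(_ q HqY) /andP[_ H].
  by rewrite Hq in H.
have nXPphi : forall q, q \in var phi -> q \notin map xp X.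
  by move=> q Hq; apply/mapP => [[x Hx E]]; have [_ + _ _] := F2 x Hx; rewrite -E Hq.
have nXMphi : forall q, q \in var phi -> q \notin map xm X.
  by move=> q Hq; apply/mapP => [[x Hx E]]; have [_ + _ _] := F1 x Hx; rewrite -E Hq.
have nXPpsi : forall q, q \in var psi -> q \notin map xp X.
  by move=> q Hq; apply/mapP => [[x Hx E]]; have [+ _ _ _] := F2 x Hx; rewrite -E Hq.
have nXMpsi : forall q, q \in var psi -> q \notin map xm X.
  by move=> q Hq; apply/mapP => [[x Hx E]]; have [+ _ _ _] := F1 x Hx; rewrite -E Hq.
set Ys := Y ++ map xp X ++ [:: p].
set r := fun q => if q \in X then xp q else q.
have HphiU : forall U, eval U (subst sigma phi) = eval (fun q => U (r q)) phi.
  move=> U; apply: subst_ren.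
    by move=> q; rewrite /sigma /r; case: ifP.
  move=> q; rewrite /r; case: ifP => Hq; last by left.
  by right; have [] := F2 q Hq.
have K1 : forall V W U, agree_off (map xm X) V W -> agree_off Ys W U ->
   eval (fun q => U (r q)) phi = eval (fun q => if q \in X then U (xp q) else V q) phi.
  move=> V W U HW HU; apply: eval_free => q Hq; rewrite /r; case: ifP => // HqX.
  have Hv := free_var _ _ Hq.
  rewrite HU ?HW ?nXMphi //.
  rewrite /Ys !mem_cat inE negb_or (negbTE (nYphi _ Hv)) (negbTE (nXPphi _ Hv)) /=.
  by apply/eqP => E; move: Hpf; rewrite -E Hq.
have K2 : forall V W U, agree_off (map xm X) V W -> agree_off Ys W U ->
   eval U psi = eval (upd (fun q => if q \in Y then U q else V q) p (U p)) psi.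
  move=> V W U HW HU; apply: eval_free => q /(free_var _ _) Hq; rewrite /upd.
  case: eqP => [->//|Hne]; case: ifP => // HqY.
  rewrite HU ?HW //; first exact: nXMpsi.
  by rewrite /Ys !mem_cat inE HqY (negbTE (nXPpsi _ Hq)) /=; apply/eqP.
have K3 : forall V W V1 bp T, agree_off (map xm X) V W -> agree_off Y V V1 ->
   exists U, [/\ agree_off Ys W U, U p = bp, (forall x, x \in X -> U (xp x) = T x)
           & eval U psi = eval (upd V1 p bp) psi].
  move=> V W V1 bp T HW HV1.
  have [G [HG1 HG2]] := extend_inj xp X T W Hxp_inj.
  exists (fun q => if q == p then bp else if q \in Y then V1 q else G q); split.
  - move=> q; rewrite /Ys !mem_cat inE !negb_or => /and3P [H1 H2 H3].
    by rewrite (negbTE H3) (negbTE H1) HG2.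
  - by rewrite eqxx.
  - move=> x Hx; have [H1 _ _ H4] := F2 x Hx.
    rewrite (negbTE H4) HG1 //; case: eqP => // E.
    by rewrite E Hp in H1.
  - apply: eval_free => q /(free_var _ _) Hq; rewrite /upd; case: eqP => // _.
    case: ifP => // HqY; rewrite (HG2 _ (nXPpsi _ Hq)) (HW _ (nXMpsi _ Hq)) HV1 ?HqY //.
have K4 : forall V (T : nat -> bool), exists W, agree_off (map xm X) V W /\ forall x, x \in X -> W (xm x) = T x.
  move=> V T; have [G [HG1 HG2]] := extend_inj xm X T V Hxm_inj.
  by exists G; split.
have K5 : forall W U x, agree_off Ys W U -> x \in X -> U (xm x) = W (xm x).
  move=> W U x HU Hx; apply: HU; have [H1 _ _ H4] := F1 x Hx.
  rewrite /Ys !mem_cat inE !negb_or H4 /=; apply/andP; split.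
    by apply/mapP => [[x' Hx' E]]; move: (Hmp x x' Hx Hx'); rewrite E eqxx.
  by apply/eqP => E; rewrite E Hp in H1.
have Fin : forall V W U b, agree_off (map xm X) V W -> agree_off Ys W U -> U p = b -> eval U psi ->
   exists V1, agree_off Y V V1 /\ eval (upd V1 p b) psi.
  move=> V W U b HW HU Up HUp; exists (fun q => if q \in Y then U q else V q); split.
    by move=> q /negbTE ->.
  by rewrite -Up -(K2 V W U).
have LHS : forall V a, (forall q, q \in free a -> q \in free phi) ->
   eval V (Ex Y (subst (subst1 p a) psi)) =
   `[< exists V1, agree_off Y V V1 /\ eval (upd V1 p (eval V a)) psi >].
  move=> V a Ha; rewrite evalEx; apply: asbool_equiv_eq.
  have E : forall V1, agree_off Y V V1 -> eval V1 a = eval V a.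
    move=> V1 HV1; apply: eval_free => q /Ha /(free_var _ _) Hq; by rewrite HV1 ?nYphi.
  split => [[V1 [HV1 He]]|[V1 [HV1 He]]]; exists V1; split => //.
    by rewrite subst1_eval // E in He.
  by rewrite subst1_eval // E.

have Hsub : forall q, q \in [seq q <- free phi | q \notin X] -> q \in free phi.
  by move=> q; rewrite mem_filter => /andP[].
split => V.
- rewrite (LHS V (Ex X phi) Hsub) (@RHS_eval V psi (subst sigma phi) X Ys xm xp p (Neg (Var p)) negb) //.
  apply: asbool_equiv_eq; split.
  + move=> [V1 [HV1 He]] W HW; move: He; case Eb: (eval V (Ex X phi)) => He.
    * move: Eb; rewrite evalEx => /asboolP [V' [HV' He']].
      have [U [HU Up HUx HUpsi]] := K3 V W V1 true V' HW HV1.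
      exists U; split => //; split.
      -- by rewrite HUpsi.
      -- rewrite Up HphiU (K1 V W U HW HU) (@eval_ext phi _ V') ?He' // => q.
         by case: ifP => Hq; [rewrite HUx | rewrite HV' ?Hq].
      -- by rewrite Up.
    * have [U [HU Up HUx HUpsi]] := K3 V W V1 false (fun x => W (xm x)) HW HV1.
      exists U; split => //; split.
      -- by rewrite HUpsi.
      -- rewrite Up HphiU (K1 V W U HW HU); apply/esym/negbTE/negP => Hphi.
         move: Eb; rewrite evalEx => /asboolP; apply; exists (fun q => if q \in X then U (xp q) else V q).
         by split => // q /negbTE ->.
      -- by move=> _ x Hx; rewrite HUx // (K5 W U x HU Hx).
  + move=> H; case Eb: (eval V (Ex X phi)).
    * move: Eb; rewrite evalEx => /asboolP [V' [HV' He']].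
      have [W [HW HWx]] := K4 V V'.
      have [U [HU [H1 H2 H3]]] := H W HW.
      apply: (Fin V W U true HW HU) => //.
      apply/negPn/negP => Hn; have HUx := H3 Hn.
      rewrite HphiU (K1 V W U HW HU) (@eval_ext phi _ V') ?He' in H2.
        by rewrite H2 in Hn.
      move=> q; case: ifP => Hq; first by rewrite HUx // (K5 W U q HU Hq) HWx.
      by rewrite HV' ?Hq.
    * have [U [HU [H1 H2 H3]]] := H V (fun q _ => erefl).
      apply: (Fin V V U false (fun q _ => erefl) HU) => //.
      apply/negbTE/negP => Hp'.
      rewrite HphiU (K1 V V U (fun q _ => erefl) HU) in H2.
      move: Eb; rewrite evalEx => /asboolP; apply; exists (fun q => if q \in X then U (xp q) else V q).
      by split; [move=> q /negbTE -> | rewrite -H2].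
- rewrite (LHS V (All X phi) Hsub) (@RHS_eval V psi (subst sigma phi) X Ys xm xp p (Var p) id) //.
  apply: asbool_equiv_eq; split.
  + move=> [V1 [HV1 He]] W HW; move: He; case Eb: (eval V (All X phi)) => He.
    * have [U [HU Up HUx HUpsi]] := K3 V W V1 true (fun x => W (xm x)) HW HV1.
      exists U; split => //; split.
      -- by rewrite HUpsi.
      -- rewrite Up HphiU (K1 V W U HW HU); move: Eb; rewrite evalAll => /asboolP Hall.
         by rewrite Hall // => q /negbTE ->.
      -- by move=> _ x Hx; rewrite HUx // (K5 W U x HU Hx).
    * have [V' [HV' He']] : exists V', agree_off X V V' /\ ~~ eval V' phi.
        case: (pselect (exists V', agree_off X V V' /\ ~~ eval V' phi)) => // Hn.
        move: Eb; rewrite evalAll => /asboolP; case => V' HV'.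
        by apply/negPn/negP => He'; apply: Hn; exists V'.
      have [U [HU Up HUx HUpsi]] := K3 V W V1 false V' HW HV1.
      exists U; split => //; split.
      -- by rewrite HUpsi.
      -- rewrite Up HphiU (K1 V W U HW HU) (@eval_ext phi _ V') ?(negbTE He') // => q.
         by case: ifP => Hq; [rewrite HUx | rewrite HV' ?Hq].
      -- by rewrite Up.
  + move=> H; case Eb: (eval V (All X phi)).
    * have [U [HU [H1 H2 H3]]] := H V (fun q _ => erefl).
      apply: (Fin V V U true (fun q _ => erefl) HU) => //.
      rewrite H2 HphiU (K1 V V U (fun q _ => erefl) HU).
      move: Eb; rewrite evalAll => /asboolP Hall.
      by rewrite Hall // => q /negbTE ->.
    * have [V' [HV' He']] : exists V', agree_off X V V' /\ ~~ eval V' phi.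
        case: (pselect (exists V', agree_off X V V' /\ ~~ eval V' phi)) => // Hn.
        move: Eb; rewrite evalAll => /asboolP; case => V' HV'.
        by apply/negPn/negP => He'; apply: Hn; exists V'.
      have [W [HW HWx]] := K4 V V'.
      have [U [HU [H1 H2 H3]]] := H W HW.
      apply: (Fin V W U false HW HU) => //.
      apply/negbTE/negP => Hn; have HUx := H3 Hn.
      rewrite HphiU (K1 V W U HW HU) (@eval_ext phi _ V') ?(negbTE He') in H2.
        by rewrite H2 in Hn.
      move=> q; case: ifP => Hq; first by rewrite HUx // (K5 W U q HU Hq) HWx.
      by rewrite HV' ?Hq.
Qed.
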